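(* Let $f_0,f_1\in \mathrm{PL}_0(\mathbf{I})$ satisfy $[f_1^{f_0},f_0f_1^{-1}]=1$ and $[f_0f_1^{-1},f_1^{f_0^2}]=1$. If $A$ is an orbital of $f_0$ and $B$ is an orbital of $f_1$ with $A\cap B\neq\emptyset$, then either $A\subseteq B$ or $B\subseteq A$.
   Context: $\mathrm{PL}_0(\mathbf{I})$ is the group of orientation-preserving piecewise-linear homeomorphisms of $[0,1]$ with finitely many points of non-differentiability. Functions act on the right: $tf=f(t)$, $fg=g\circ f$, $a^b=b^{-1}ab$, $[a,b]=aba^{-1}b^{-1}$. The orbitals of $f$ are the connected components (open intervals) of $\operatorname{Supp}(f)=\{x: xf\ne x\}$. *)

(* Defs.v *)
From Stdlib Require Import Reals List.
Open Scope R_scope.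

Fixpoint affine_pieces (f : R -> R) (l : list R) : Prop :=
  match l with
  | a :: ((b :: _) as t) =>
      a < b /\ (exists m c : R, forall x, a <= x <= b -> f x = m * x + c)
      /\ affine_pieces f t
  | _ => True
  end.

(* f (restricted to [0,1]) is an element of PL_0(I): an orientation-preserving
   homeomorphism of [0,1] (fixes 0 and 1, strictly increasing, continuous --
   continuity follows from being piecewise affine on closed pieces) which is
   piecewise linear with finitely many breakpoints. *)
Definition PL0 (f : R -> R) : Prop :=
  f 0 = 0 /\ f 1 = 1 /\
  (forall x y, 0 <= x -> x < y -> y <= 1 -> f x < f y) /\
  exists l : list R, affine_pieces f (0 :: l) /\ last (0 :: l) 0 = 1.

Definition is_inv (f g : R -> R) : Prop :=
  forall x, 0 <= x <= 1 -> g (f x) = x /\ f (g x) = x.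

(* Right actions: t(fg) = g(f(t)), so the product fg is "first f then g". *)
Definition pmul (f g : R -> R) : R -> R := fun x => g (f x).

Definition pconj (a b binv : R -> R) : R -> R := pmul (pmul binv a) b.

Definition pcomm (a ainv b binv : R -> R) : R -> R :=
  pmul (pmul (pmul a b) ainv) binv.

Definition is_id (h : R -> R) : Prop := forall x, 0 <= x <= 1 -> h x = x.

Definition supp (f : R -> R) (x : R) : Prop := 0 <= x <= 1 /\ f x <> x.

(* A is an orbital of f: a connected component of Supp(f), i.e. an open
   interval (a,b) contained in Supp(f) whose endpoints are not in Supp(f). *)
Definition orbital (f : R -> R) (A : R -> Prop) : Prop :=
  exists a b : R, a < b /\ 0 <= a /\ b <= 1 /\
    (forall x, A x <-> a < x < b) /\
    (forall x, a < x < b -> supp f x) /\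
    ~ supp f a /\ ~ supp f b.

(* Main.v *)
Require Import Defs.
From Stdlib Require Import Reals Lra Psatz Classical List.
Open Scope R_scope.

Definition incr (f : R -> R) : Prop :=
  forall x y, 0 <= x -> x < y -> y <= 1 -> f x < f y.
Definition RA (f : R -> R) (p : R) : Prop :=
  exists e, e > 0 /\ p + e <= 1 /\ exists m c, forall x, p <= x <= p + e -> f x = m * x + c.
Definition LA (f : R -> R) (p : R) : Prop :=
  exists e, e > 0 /\ 0 <= p - e /\ exists m c, forall x, p - e <= x <= p -> f x = m * x + c.
Definition good (f : R -> R) : Prop :=
  f 0 = 0 /\ f 1 = 1 /\ incr f /\ (forall p, 0 <= p < 1 -> RA f p) /\
  (forall p, 0 < p <= 1 -> LA f p).
Definition inv_pair (f fi : R -> R) : Prop :=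
  forall x, 0 <= x <= 1 -> (0 <= fi x <= 1 /\ 0 <= f x <= 1 /\ fi (f x) = x /\ f (fi x) = x).
Definition OE (f : R -> R) (c0 c1 : R) : Prop :=
  c0 < c1 /\ 0 <= c0 /\ c1 <= 1 /\ f c0 = c0 /\ f c1 = c1 /\
  (forall x, c0 < x < c1 -> f x <> x).
Definition refl (f : R -> R) : R -> R := fun x => 1 - f (1 - x).

Lemma incr_le f x y : incr f -> 0 <= x -> x <= y -> y <= 1 -> f x <= f y.
Proof. intros H a b c. destruct (Req_dec x y) as [->|n]; [lra|]. left; apply H; lra. Qed.

Lemma incr_inj f x y : incr f -> 0 <= x <= 1 -> 0 <= y <= 1 -> f x = f y -> x = y.
Proof.
  intros H a b e. destruct (Rtotal_order x y) as [l|[l|l]]; auto.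
  - assert (f x < f y) by (apply H; lra); lra.
  - assert (f y < f x) by (apply H; lra); lra.
Qed.

Lemma good_range f x : good f -> 0 <= x <= 1 -> 0 <= f x <= 1.
Proof.
  intros (h0 & h1 & hi & _) Hx. split.
  - rewrite <- h0. apply incr_le; auto; lra.
  - rewrite <- h1. apply incr_le; auto; lra.
Qed.

Lemma slope_bound m k eta d : 0 <= k <= eta -> eta > 0 -> eta * (m * m + 1) <= d ->
  - d < m * k < d.
Proof.
  intros Hk He Hd.
  assert (Q1 : m*m - m + 1 > 0) by nra. assert (Q2 : m*m + m + 1 > 0) by nra.
  assert (eta * (m*m - m + 1) > 0) by (apply Rmult_lt_0_compat; lra).
  assert (eta * (m*m + m + 1) > 0) by (apply Rmult_lt_0_compat; lra).
  destruct (Rle_lt_dec 0 m).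
  - assert (m * k <= m * eta) by nra. assert (m * eta < eta * (m*m+1)) by nra. nra.
  - assert (m * k >= m * eta) by nra. assert (- (m * eta) < eta * (m*m+1)) by nra. nra.
Qed.

Lemma choose_eta e m d : e > 0 -> d > 0 -> exists eta, eta > 0 /\ eta <= e /\ eta * (m*m+1) <= d.
Proof.
  intros He Hd. exists (Rmin e (d / (m*m+1))).
  assert (Hp : m*m+1 > 0) by nra.
  assert (0 < d / (m*m+1)) by (apply Rdiv_lt_0_compat; lra).
  split; [apply Rmin_glb_lt; lra|]. split; [apply Rmin_l|].
  assert (Rmin e (d / (m * m + 1)) <= d / (m*m+1)) by apply Rmin_r.
  apply Rmult_le_compat_r with (r := m*m+1) in H0; [|lra].
  unfold Rdiv in H0. rewrite Rmult_assoc, Rinv_l in H0; lra.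
Qed.

Lemma RA_cont f p : RA f p -> forall d, d > 0 -> exists eta, eta > 0 /\ p + eta <= 1 /\
  forall x, p <= x <= p + eta -> f p - d < f x < f p + d.
Proof.
  intros (e & He & Hle & m & c & Hf) d Hd.
  destruct (choose_eta e m d He Hd) as (eta & H1 & H2 & H3).
  exists eta; split; [lra|]; split; [lra|]. intros y Hy.
  rewrite (Hf y ltac:(lra)), (Hf p ltac:(lra)).
  pose proof (slope_bound m (y - p) eta d ltac:(lra) H1 H3); nra.
Qed.

Lemma LA_cont f p : LA f p -> forall d, d > 0 -> exists eta, eta > 0 /\ 0 <= p - eta /\
  forall x, p - eta <= x <= p -> f p - d < f x < f p + d.
Proof.
  intros (e & He & Hle & m & c & Hf) d Hd.
  destruct (choose_eta e m d He Hd) as (eta & H1 & H2 & H3).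
  exists eta; split; [lra|]; split; [lra|]. intros y Hy.
  rewrite (Hf y ltac:(lra)), (Hf p ltac:(lra)).
  pose proof (slope_bound m (p - y) eta d ltac:(lra) H1 H3); nra.
Qed.

Lemma incr_comp a b : incr a -> incr b -> (forall x, 0 <= x <= 1 -> 0 <= a x <= 1) ->
  incr (fun x => b (a x)).
Proof. intros Ha Hb Hr x y h1 h2 h3. apply Hb; [apply Hr; lra | apply Ha; auto | apply Hr; lra]. Qed.

Lemma good_comp a b : good a -> good b -> good (fun x => b (a x)).
Proof.
  intros Ga Gb. pose proof Ga as (a0 & a1 & ai & ar & al). pose proof Gb as (b0 & b1 & bi & br & bl).
  split; [rewrite a0; auto|]. split; [rewrite a1; auto|].
  split; [apply incr_comp; auto; intros; apply good_range; auto|].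
  split.
  - intros p Hp.
    assert (Hap : 0 <= a p < 1).
    { split; [apply (good_range a p Ga); lra|]. rewrite <- a1. apply ai; lra. }
    destruct (br (a p) Hap) as (e2 & He2 & Hle2 & m2 & c2 & Hf2).
    destruct (ar p Hp) as (e1 & He1 & Hle1 & m1 & c1 & Hf1).
    destruct (RA_cont a p (ar p Hp) e2 He2) as (eta & Heta & Hle & Hc).
    exists (Rmin e1 eta). split; [apply Rmin_glb_lt; lra|].
    assert (Rmin e1 eta <= e1) by apply Rmin_l. assert (Rmin e1 eta <= eta) by apply Rmin_r.
    split; [lra|]. exists (m2 * m1), (m2 * c1 + c2). intros x Hx.
    assert (a p <= a x) by (apply incr_le; auto; lra).
    specialize (Hc x ltac:(lra)).
    rewrite (Hf2 (a x) ltac:(lra)), (Hf1 x ltac:(lra)). ring.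
  - intros p Hp.
    assert (Hap : 0 < a p <= 1).
    { split; [|apply (good_range a p Ga); lra]. rewrite <- a0. apply ai; lra. }
    destruct (bl (a p) Hap) as (e2 & He2 & Hle2 & m2 & c2 & Hf2).
    destruct (al p Hp) as (e1 & He1 & Hle1 & m1 & c1 & Hf1).
    destruct (LA_cont a p (al p Hp) e2 He2) as (eta & Heta & Hle & Hc).
    exists (Rmin e1 eta). split; [apply Rmin_glb_lt; lra|].
    assert (Rmin e1 eta <= e1) by apply Rmin_l. assert (Rmin e1 eta <= eta) by apply Rmin_r.
    split; [lra|]. exists (m2 * m1), (m2 * c1 + c2). intros x Hx.
    assert (a x <= a p) by (apply incr_le; auto; lra).
    specialize (Hc x ltac:(lra)).
    rewrite (Hf2 (a x) ltac:(lra)), (Hf1 x ltac:(lra)). ring.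
Qed.

Lemma inv_pair_sym f fi : inv_pair f fi -> inv_pair fi f.
Proof. intros H x Hx. destruct (H x Hx) as (A & B & C & D). auto. Qed.

Lemma inv_pair_comp a ai b bi : inv_pair a ai -> inv_pair b bi ->
  inv_pair (pmul a b) (pmul bi ai).
Proof.
  intros Ha Hb x Hx. unfold pmul.
  destruct (Ha x Hx) as (A1 & A2 & A3 & A4). destruct (Hb x Hx) as (B1 & B2 & B3 & B4).
  destruct (Ha (bi x) B1) as (C1 & C2 & C3 & C4). destruct (Hb (a x) A2) as (D1 & D2 & D3 & D4).
  rewrite D3, C4. auto.
Qed.

Lemma good_inv f fi : good f -> inv_pair f fi -> good fi.
Proof.
  intros Gf Hi. pose proof Gf as (f0 & f1 & fI & fr & fl).
  assert (I0 : fi 0 = 0). { destruct (Hi 0 ltac:(lra)) as (_&_&H&_). rewrite f0 in H; auto. }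
  assert (I1 : fi 1 = 1). { destruct (Hi 1 ltac:(lra)) as (_&_&H&_). rewrite f1 in H; auto. }
  assert (II : incr fi).
  { intros x y h1 h2 h3. destruct (Hi x ltac:(lra)) as (X1&_&_&X4). destruct (Hi y ltac:(lra)) as (Y1&_&_&Y4).
    destruct (Rlt_le_dec (fi x) (fi y)) as [|l]; auto.
    assert (f (fi y) <= f (fi x)) by (apply incr_le; auto; lra). lra. }
  split; auto. split; auto. split; auto. split.
  - intros p Hp. destruct (Hi p ltac:(lra)) as (P1 & _ & _ & P4).
    set (q := fi p) in *.
    assert (Hq : q < 1). { destruct (Req_dec q 1) as [e|]; [|lra]. rewrite e, f1 in P4. lra. }
    destruct (fr q ltac:(lra)) as (e & He & Hle & m & c & Hf).
    assert (Hfq : f q < f (q + e)) by (apply fI; lra).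
    assert (Hm : m > 0). { rewrite (Hf q ltac:(lra)), (Hf (q+e) ltac:(lra)) in Hfq. nra. }
    assert (R1 : f (q+e) <= 1) by (apply (good_range f (q+e) Gf); lra).
    exists (f (q + e) - p). split; [lra|]. split; [lra|].
    exists (/ m), (- c / m). intros y Hy.
    destruct (Hi y ltac:(lra)) as (Y1 & _ & _ & Y4).
    assert (fi y <= q + e).
    { destruct (Hi (q+e) ltac:(lra)) as (_&_&Z&_). rewrite <- Z. apply incr_le; auto; lra. }
    assert (q <= fi y) by (unfold q; apply incr_le; auto; lra).
    rewrite (Hf (fi y) ltac:(lra)) in Y4. rewrite <- Y4 at 2. field. lra.
  - intros p Hp. destruct (Hi p ltac:(lra)) as (P1 & _ & _ & P4).
    set (q := fi p) in *.
    assert (Hq : 0 < q). { destruct (Req_dec q 0) as [e|]; [|lra]. rewrite e, f0 in P4. lra. }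
    destruct (fl q ltac:(lra)) as (e & He & Hle & m & c & Hf).
    assert (Hfq : f (q - e) < f q) by (apply fI; lra).
    assert (Hm : m > 0). { rewrite (Hf q ltac:(lra)), (Hf (q-e) ltac:(lra)) in Hfq. nra. }
    assert (R1 : 0 <= f (q-e)) by (apply (good_range f (q-e) Gf); lra).
    exists (p - f (q - e)). split; [lra|]. split; [lra|].
    exists (/ m), (- c / m). intros y Hy.
    destruct (Hi y ltac:(lra)) as (Y1 & _ & _ & Y4).
    assert (q - e <= fi y).
    { destruct (Hi (q-e) ltac:(lra)) as (_&_&Z&_). rewrite <- Z. apply incr_le; auto; lra. }
    assert (fi y <= q) by (unfold q; apply incr_le; auto; lra).
    rewrite (Hf (fi y) ltac:(lra)) in Y4. rewrite <- Y4 at 2. field. lra.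
Qed.

Lemma last_ge f : forall t b d, affine_pieces f (b :: t) -> b <= last (b :: t) d.
Proof.
  induction t as [|c t IH]; intros b d H; simpl; [lra|].
  destruct H as (H1 & _ & H3). specialize (IH c d H3). simpl in IH.
  destruct t; lra.
Qed.

Lemma pieces_RA f : forall t a d, affine_pieces f (a :: t) -> forall p, a <= p < last (a :: t) d ->
  exists e, e > 0 /\ p + e <= last (a :: t) d /\ exists m c, forall x, p <= x <= p + e -> f x = m * x + c.
Proof.
  induction t as [|b t IH]; intros a d H p Hp.
  - simpl in Hp. lra.
  - destruct H as (H1 & (m & c & Hf) & H3).
    change (last (a :: b :: t) d) with (last (b :: t) d) in *.
    destruct (Rlt_le_dec p b).
    + pose proof (last_ge f t b d H3). exists (b - p). split; [lra|]. split; [lra|].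
      exists m, c. intros x Hx. apply Hf; lra.
    + apply IH; auto; lra.
Qed.

Lemma pieces_LA f : forall t a d, affine_pieces f (a :: t) -> forall p, a < p <= last (a :: t) d ->
  exists e, e > 0 /\ a <= p - e /\ exists m c, forall x, p - e <= x <= p -> f x = m * x + c.
Proof.
  induction t as [|b t IH]; intros a d H p Hp.
  - simpl in Hp. lra.
  - destruct H as (H1 & (m & c & Hf) & H3).
    change (last (a :: b :: t) d) with (last (b :: t) d) in *.
    destruct (Rle_lt_dec p b).
    + exists (p - a). split; [lra|]. split; [lra|].
      exists m, c. intros x Hx. apply Hf; lra.
    + destruct (IH b d H3 p ltac:(lra)) as (e & He & Hb & R). exists e. split; auto. split; [lra|auto].
Qed.

Lemma pieces_surj f : incr f -> forall t a d, affine_pieces f (a :: t) -> 0 <= a -> last (a :: t) d <= 1 ->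
  forall y, f a <= y <= f (last (a :: t) d) -> exists x, a <= x <= last (a :: t) d /\ f x = y.
Proof.
  intros Hinc. induction t as [|b t IH]; intros a d H Ha Hl y Hy.
  - simpl in *. exists a. split; [lra|]. lra.
  - destruct H as (H1 & (m & c & Hf) & H3).
    change (last (a :: b :: t) d) with (last (b :: t) d) in *.
    pose proof (last_ge f t b d H3).
    destruct (Rle_lt_dec y (f b)).
    + assert (f a < f b) by (apply Hinc; lra).
      rewrite (Hf a ltac:(lra)), (Hf b ltac:(lra)) in *.
      assert (Hm : m > 0) by nra.
      exists ((y - c) / m).
      assert (a <= (y - c) / m).
      { apply Rmult_le_reg_r with m; auto. unfold Rdiv. rewrite Rmult_assoc, Rinv_l; lra. }
      assert ((y - c) / m <= b).
      { apply Rmult_le_reg_r with m; auto. unfold Rdiv. rewrite Rmult_assoc, Rinv_l; lra. }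
      split; [lra|]. rewrite Hf by lra. field. lra.
    + destruct (IH b d H3 ltac:(lra) Hl y ltac:(lra)) as (x & Hx & E). exists x. split; [lra|auto].
Qed.

Lemma PL0_good f : PL0 f -> good f.
Proof.
  intros (h0 & h1 & hi & l & Hp & Hl). split; auto. split; auto. split; auto. split.
  - intros p Hpp. destruct (pieces_RA f l 0 0 Hp p ltac:(lra)) as (e & He & Hle & R).
    exists e. split; auto. split; [lra|auto].
  - intros p Hpp. destruct (pieces_LA f l 0 0 Hp p ltac:(lra)) as (e & He & Hle & R).
    exists e. split; auto.
Qed.

Lemma PL0_inv f g : PL0 f -> is_inv f g -> inv_pair f g.
Proof.
  intros HP Hi. pose proof (PL0_good f HP) as G.
  destruct HP as (h0 & h1 & hi & l & Hp & Hl).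
  intros x Hx. destruct (pieces_surj f hi l 0 0 Hp ltac:(lra) ltac:(lra) x) as (z & Hz & E).
  { rewrite Hl, h0, h1. lra. }
  rewrite Hl in Hz. destruct (Hi z Hz) as (A & B). destruct (Hi x Hx) as (C & D).
  split; [rewrite <- E, A; lra|]. split; [apply good_range; auto|]. auto.
Qed.

Lemma refl_good f : good f -> good (refl f).
Proof.
  intros (h0 & h1 & hi & hr & hl). unfold refl; cbv beta.
  split; [replace (1-0) with 1 by ring; lra|]. split; [replace (1-1) with 0 by ring; lra|].
  split; [intros x y a b c; assert (f (1-y) < f (1-x)) by (apply hi; lra); lra|].
  split.
  - intros p Hp. destruct (hl (1 - p) ltac:(lra)) as (e & He & Hle & m & c & Hf).
    exists e. split; auto. split; [lra|]. exists m, (1 - m - c). intros x Hx.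
    rewrite Hf by lra. ring.
  - intros p Hp. destruct (hr (1 - p) ltac:(lra)) as (e & He & Hle & m & c & Hf).
    exists e. split; auto. split; [lra|]. exists m, (1 - m - c). intros x Hx.
    rewrite Hf by lra. ring.
Qed.

Lemma refl_inv f fi : inv_pair f fi -> inv_pair (refl f) (refl fi).
Proof.
  intros H x Hx. unfold refl; cbv beta. destruct (H (1 - x) ltac:(lra)) as (A & B & C & D).
  replace (1 - (1 - fi (1 - x))) with (fi (1 - x)) by ring.
  replace (1 - (1 - f (1 - x))) with (f (1 - x)) by ring.
  rewrite C, D. repeat split; lra.
Qed.

Lemma refl_comm g h : (forall x, 0 <= x <= 1 -> g (h x) = h (g x)) ->
  forall x, 0 <= x <= 1 -> refl g (refl h x) = refl h (refl g x).
Proof.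
  intros H x Hx. unfold refl; cbv beta.
  replace (1 - (1 - h (1 - x))) with (h (1 - x)) by ring.
  replace (1 - (1 - g (1 - x))) with (g (1 - x)) by ring.
  rewrite H by lra. auto.
Qed.

Lemma refl_OE f c0 c1 : OE f c0 c1 -> OE (refl f) (1 - c1) (1 - c0).
Proof.
  intros (A & B & C & D & E & F). unfold OE, refl; cbv beta.
  replace (1 - (1 - c1)) with c1 by ring. replace (1 - (1 - c0)) with c0 by ring.
  split; [lra|]. split; [lra|]. split; [lra|]. split; [lra|]. split; [lra|].
  intros x Hx. specialize (F (1 - x) ltac:(lra)). intro. apply F. lra.
Qed.

Lemma LA_nofix f p : LA f p -> f p <> p -> exists eta, eta > 0 /\ forall x, p - eta <= x <= p -> f x <> x.
Proof.
  intros HL Hn. destruct (Rlt_le_dec p (f p)).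
  - destruct (LA_cont f p HL ((f p - p)/2) ltac:(lra)) as (eta & He & _ & Hc).
    exists eta. split; auto. intros x Hx. specialize (Hc x Hx). lra.
  - destruct (LA_cont f p HL ((p - f p)/2) ltac:(lra)) as (eta & He & _ & Hc).
    exists (Rmin eta ((p - f p)/2)). split.
    + apply Rmin_glb_lt; lra.
    + intros x Hx. assert (Rmin eta ((p - f p)/2) <= eta) by apply Rmin_l.
      assert (Rmin eta ((p - f p)/2) <= (p - f p)/2) by apply Rmin_r.
      specialize (Hc x ltac:(lra)). lra.
Qed.

Lemma left_end g e : good g -> 0 <= e <= 1 -> g e <> e ->
  exists c0, 0 <= c0 < e /\ g c0 = c0 /\ forall x, c0 < x <= e -> g x <> x.
Proof.
  intros G He Hn. pose proof G as (g0 & g1 & gi & gr & gl).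
  set (E := fun x => 0 <= x <= e /\ g x = x).
  destruct (completeness E) as (c & Hub & Hlub).
  { exists e. intros x Hx. unfold E in Hx; lra. }
  { exists 0. unfold E. split; [lra|auto]. }
  assert (c0pos : 0 <= c) by (apply Hub; unfold E; split; [lra|auto]).
  assert (cle : c <= e) by (apply Hlub; intros x Hx; unfold E in Hx; lra).
  assert (Hfix : g c = c).
  { destruct (Req_dec c 0) as [->|nz]; auto.
    destruct (Req_dec (g c) c) as [|Hne]; auto. exfalso.
    destruct (LA_nofix g c (gl c ltac:(lra)) Hne) as (eta & Heta & Hnf).
    destruct (classic (exists x, E x /\ c - eta < x)) as [(x & Ex & Hx)|Hno].
    - assert (x <= c) by (apply Hub; auto). destruct Ex as (_ & Ex).
      apply (Hnf x); [lra|auto].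
    - assert (c <= c - eta); [|lra]. apply Hlub. intros x Ex.
      destruct (Rle_lt_dec x (c - eta)); auto. exfalso; apply Hno; eauto. }
  assert (c <> e) by (intros ->; auto).
  exists c. split; [lra|]. split; auto. intros x Hx Hgx.
  assert (x <= c) by (apply Hub; unfold E; split; [lra|auto]). lra.
Qed.

Lemma exists_orbital g e : good g -> 0 <= e <= 1 -> g e <> e ->
  exists c0 c1, OE g c0 c1 /\ c0 < e < c1.
Proof.
  intros G He Hn.
  destruct (left_end g e G He Hn) as (c0 & Hc0 & F0 & N0).
  destruct (left_end (refl g) (1 - e) (refl_good g G) ltac:(lra)) as (d & Hd & Fd & Nd).
  { unfold refl; cbv beta. replace (1 - (1 - e)) with e by ring. lra. }
  exists c0, (1 - d). unfold refl in Fd, Nd; cbv beta in Fd, Nd.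
  split; [|lra]. split; [lra|]. split; [lra|]. split; [lra|]. split; auto. split; [lra|].
  intros x Hx. destruct (Rle_lt_dec x e).
  - apply N0; lra.
  - specialize (Nd (1 - x) ltac:(lra)). replace (1 - (1 - x)) with x in Nd by ring. lra.
Qed.

Lemma inf_step (P : R -> Prop) c0 c1 :
  0 <= c0 -> c0 < c1 -> c1 <= 1 ->
  (exists x, c0 < x < c1 /\ P x) ->
  (forall s, c0 < s < c1 -> exists phi, phi s < s /\ RA phi s /\ phi c0 = c0 /\ incr phi /\
     (forall x, c0 < x < c1 -> P x -> P (phi x))) ->
  forall d, d > 0 -> exists x, c0 < x < c0 + d /\ x < c1 /\ P x.
Proof.
  intros H0 H01 H1 (x0 & Hx0 & Px0) Hprov d Hd.
  apply NNPP. intro Hno.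
  set (S := fun x => c0 < x < c1 /\ P x).
  set (L := fun y => c0 <= y /\ forall x, S x -> y <= x).
  destruct (completeness L) as (s & Hub & Hlub).
  { exists x0. intros y (_ & Hy). apply Hy. split; auto. }
  { exists c0. split; [lra|]. intros x (Hx & _). lra. }
  assert (Hlow : forall x, S x -> s <= x).
  { intros x Sx. apply Hlub. intros y (_ & Hy). auto. }
  assert (Hs1 : c0 + d <= s).
  { apply Hub. split; [lra|]. intros x (Hx & Px). destruct (Rle_lt_dec (c0 + d) x); auto.
    exfalso. apply Hno. exists x. split; [lra|]. split; [lra|auto]. }
  assert (Hs2 : s <= x0) by (apply Hlow; split; auto).
  destruct (Hprov s ltac:(lra)) as (phi & Hlt & Hra & Hc0 & Hinc & Hinv).
  destruct (RA_cont phi s Hra (s - phi s) ltac:(lra)) as (eta & Heta & Hle & Hc).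
  destruct (classic (exists x, S x /\ x < s + eta)) as [(x & Sx & Hx)|Hn].
  - assert (s <= x) by (apply Hlow; auto).
    destruct Sx as (Hx1 & Px).
    specialize (Hc x ltac:(lra)).
    assert (c0 < phi x) by (rewrite <- Hc0; apply Hinc; lra).
    assert (s <= phi x); [|lra]. apply Hlow. split; [lra|]. apply Hinv; auto.
  - assert (s + eta <= s); [|lra]. apply Hub. split; [lra|]. intros x Sx.
    destruct (Rle_lt_dec (s + eta) x); auto. exfalso; apply Hn; eauto.
Qed.

Lemma provider g gi c0 c1 (P : R -> Prop) : good g -> good gi -> inv_pair g gi -> OE g c0 c1 ->
  (forall x, c0 < x < c1 -> P x -> P (g x)) -> (forall x, c0 < x < c1 -> P x -> P (gi x)) ->
  forall s, c0 < s < c1 -> exists phi, phi s < s /\ RA phi s /\ phi c0 = c0 /\ incr phi /\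
     (forall x, c0 < x < c1 -> P x -> P (phi x)).
Proof.
  intros Gg Ggi Hi (A & B & C & D & E & F) Ig Igi s Hs.
  pose proof Gg as (_ & _ & gI & gR & _). pose proof Ggi as (_ & _ & giI & giR & _).
  assert (Hgi0 : gi c0 = c0). { destruct (Hi c0 ltac:(lra)) as (_ & _ & X & _). rewrite D in X; auto. }
  destruct (Rlt_le_dec (g s) s).
  - exists g. split; auto. split; [apply gR; lra|]. auto.
  - exists gi. assert (g s <> s) by (apply F; auto).
    destruct (Hi s ltac:(lra)) as (S1 & _ & _ & S4).
    split.
    + destruct (Rlt_le_dec (gi s) s); auto.
      assert (g s <= g (gi s)) by (apply incr_le; auto; lra). lra.
    + split; [apply giR; lra|]. auto.
Qed.

Lemma CL g gi h c0 c1 p q : good g -> good gi -> good h -> inv_pair g gi ->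
  (forall x, 0 <= x <= 1 -> g (h x) = h (g x)) -> OE g c0 c1 ->
  c0 < p < c1 -> h p = p -> c0 < q < c1 -> h q <> q -> False.
Proof.
  intros Gg Ggi Gh Hi Hc HO Hp Fp Hq Nq.
  pose proof HO as (A & B & C & D & E & F).
  pose proof Gg as (_ & _ & gI & _ & _). pose proof Gh as (_ & _ & hI & hR & _).
  assert (Step1 := inf_step (fun x => h x = x) c0 c1 B A C ltac:(exists p; auto)).
  assert (Step2 := inf_step (fun x => h x <> x) c0 c1 B A C ltac:(exists q; auto)).
  assert (I1g : forall x, c0 < x < c1 -> h x = x -> h (g x) = g x).
  { intros x Hx Px. rewrite <- Hc by lra. rewrite Px. auto. }
  assert (I1gi : forall x, c0 < x < c1 -> h x = x -> h (gi x) = gi x).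
  { intros x Hx Px. destruct (Hi x ltac:(lra)) as (X1 & _ & _ & X4).
    apply (incr_inj g); auto; [apply good_range; auto|]. rewrite Hc by auto. rewrite X4; auto. }
  assert (I2g : forall x, c0 < x < c1 -> h x <> x -> h (g x) <> g x).
  { intros x Hx Px. rewrite <- Hc by lra. intro E'.
    apply Px. apply (incr_inj g); auto; [apply good_range; auto; lra|lra]. }
  assert (I2gi : forall x, c0 < x < c1 -> h x <> x -> h (gi x) <> gi x).
  { intros x Hx Px. destruct (Hi x ltac:(lra)) as (X1 & _ & _ & X4).
    intro E'. apply Px. rewrite <- X4 at 1. rewrite <- Hc by auto. rewrite E', X4. auto. }
  pose proof (Step1 (provider g gi c0 c1 _ Gg Ggi Hi HO I1g I1gi)) as S1.
  pose proof (Step2 (provider g gi c0 c1 _ Gg Ggi Hi HO I2g I2gi)) as S2.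
  destruct (hR c0 ltac:(lra)) as (e & He & Hle & m & c & Hf).
  destruct (S1 e He) as (p1 & Hp1 & _ & F1).
  destruct (S1 (p1 - c0) ltac:(lra)) as (p2 & Hp2 & _ & F2).
  cbv beta in F1, F2.
  rewrite (Hf p1 ltac:(lra)) in F1. rewrite (Hf p2 ltac:(lra)) in F2.
  assert (Hm : m = 1) by nra. subst m. assert (c = 0) by lra. subst c.
  destruct (S2 e He) as (x & Hx & _ & Nx). cbv beta in Nx.
  apply Nx. rewrite Hf by lra. ring.
Qed.

Lemma EqOrbL g gi h hi c0 c1 u0 u1 : good g -> good gi -> good h -> good hi ->
  inv_pair g gi -> inv_pair h hi -> (forall x, 0 <= x <= 1 -> g (h x) = h (g x)) ->
  OE g c0 c1 -> OE h u0 u1 -> (exists x, c0 < x < c1 /\ u0 < x < u1) -> c0 = u0.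
Proof.
  intros Gg Ggi Gh Ghi Ig Ih Hc Og Oh (x & Hx1 & Hx2).
  pose proof Og as (A & B & C & D & E & F). pose proof Oh as (A' & B' & C' & D' & E' & F').
  destruct (Rtotal_order c0 u0) as [l|[l|l]]; auto; exfalso.
  - apply (CL g gi h c0 c1 u0 x); auto; lra.
  - apply (CL h hi g u0 u1 c0 x); auto; try lra.
    intros y Hy. symmetry; auto.
Qed.

Lemma EqOrb g gi h hi c0 c1 u0 u1 : good g -> good gi -> good h -> good hi ->
  inv_pair g gi -> inv_pair h hi -> (forall x, 0 <= x <= 1 -> g (h x) = h (g x)) ->
  OE g c0 c1 -> OE h u0 u1 -> (exists x, c0 < x < c1 /\ u0 < x < u1) -> c0 = u0 /\ c1 = u1.
Proof.
  intros Gg Ggi Gh Ghi Ig Ih Hc Og Oh (x & Hx1 & Hx2).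
  split; [apply (EqOrbL g gi h hi c0 c1 u0 u1); eauto|].
  assert (1 - c1 = 1 - u1); [|lra].
  apply (EqOrbL (refl g) (refl gi) (refl h) (refl hi) (1 - c1) (1 - c0) (1 - u1) (1 - u0));
    auto using refl_good, refl_inv, refl_comm, refl_OE.
  exists (1 - x). lra.
Qed.

Lemma comm_of a ai b bi : inv_pair a ai -> inv_pair b bi -> is_id (pcomm a ai b bi) ->
  forall x, 0 <= x <= 1 -> b (a x) = a (b x).
Proof.
  intros Ia Ib H x Hx. specialize (H x Hx). unfold pcomm, pmul in H.
  destruct (Ia x Hx) as (_ & A2 & _ & _). destruct (Ib (a x) A2) as (_ & B2 & _ & _).
  destruct (Ia (b (a x)) B2) as (C1 & _ & _ & C4).
  destruct (Ib (ai (b (a x))) C1) as (_ & _ & _ & D4).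
  rewrite H in D4. rewrite <- D4 in C4. auto.
Qed.

Lemma orbital_OE f A : orbital f A -> exists a0 a1, OE f a0 a1 /\ forall x, A x <-> a0 < x < a1.
Proof.
  intros (a0 & a1 & h & h0 & h1 & HA & Hs & N0 & N1). exists a0, a1. split; auto.
  split; auto. split; auto. split; auto.
  split; [destruct (Req_dec (f a0) a0); auto; exfalso; apply N0; split; auto; lra|].
  split; [destruct (Req_dec (f a1) a1); auto; exfalso; apply N1; split; auto; lra|].
  intros x Hx. apply Hs; auto.
Qed.

Lemma OE_conj k ki f b0 b1 : good k -> inv_pair k ki -> good f -> OE f b0 b1 ->
  OE (fun x => k (f (ki x))) (k b0) (k b1).
Proof.
  intros Gk Ik Gf (A & B & C & D & E & F).
  pose proof Gk as (_ & _ & kI & _ & _). pose proof (good_inv k ki Gk Ik) as (_ & _ & kiI & _ & _).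
  destruct (Ik b0 ltac:(lra)) as (_ & R0 & K0 & _). destruct (Ik b1 ltac:(lra)) as (_ & R1 & K1 & _).
  split; [apply kI; lra|]. split; [lra|]. split; [lra|].
  split; [rewrite K0, D; auto|]. split; [rewrite K1, E; auto|].
  intros x Hx. destruct (Ik x ltac:(lra)) as (X1 & _ & _ & X4).
  assert (b0 < ki x).
  { destruct (Rlt_le_dec b0 (ki x)); auto. assert (k (ki x) <= k b0) by (apply incr_le; auto; lra). lra. }
  assert (ki x < b1).
  { destruct (Rlt_le_dec (ki x) b1); auto. assert (k b1 <= k (ki x)) by (apply incr_le; auto; lra). lra. }
  intro Eq. apply (F (ki x)); [lra|]. apply (incr_inj k); auto; [apply good_range; auto; lra|].
  rewrite Eq, X4. auto.
Qed.

Theorem lemma2p3 (f0 g0 f1 g1 : R -> R) :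
  PL0 f0 -> PL0 f1 -> is_inv f0 g0 -> is_inv f1 g1 ->
  (* [f1^{f0}, f0 f1^{-1}] = 1 *)
  is_id (pcomm (pconj f1 f0 g0) (pconj g1 f0 g0) (pmul f0 g1) (pmul f1 g0)) ->
  (* [f0 f1^{-1}, f1^{f0^2}] = 1 *)
  is_id (pcomm (pmul f0 g1) (pmul f1 g0)
               (pconj f1 (pmul f0 f0) (pmul g0 g0))
               (pconj g1 (pmul f0 f0) (pmul g0 g0))) ->
  forall A B : R -> Prop, orbital f0 A -> orbital f1 B ->
  (exists x, A x /\ B x) ->
  (forall x, A x -> B x) \/ (forall x, B x -> A x).
Proof.
  intros HP0 HP1 Hi0 Hi1 Hc1 Hc2 A B HA HB (x & Ax & Bx).
  pose proof (PL0_good f0 HP0) as G0. pose proof (PL0_good f1 HP1) as G1.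
  pose proof (PL0_inv f0 g0 HP0 Hi0) as I0. pose proof (PL0_inv f1 g1 HP1 Hi1) as I1.
  pose proof (good_inv f0 g0 G0 I0) as Gg0. pose proof (good_inv f1 g1 G1 I1) as Gg1.
  destruct (orbital_OE f0 A HA) as (a0 & a1 & OA & EA).
  destruct (orbital_OE f1 B HB) as (b0 & b1 & OB & EB).
  apply EA in Ax. apply EB in Bx.
  assert (Key : forall e, b0 < e < b1 -> f0 e = e -> f0 b0 = b0 /\ f0 b1 = b1).
  { intros e He Fe.
    pose proof OB as (B1 & B2 & B3 & B4 & B5 & B6).
    pose proof G0 as (_ & _ & I0c & _ & _).
    assert (Gg : good (pmul f0 g1)) by exact (good_comp f0 g1 G0 Gg1).
    assert (Ggi : good (pmul f1 g0)) by exact (good_comp f1 g0 G1 Gg0).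
    assert (Gk : good (pmul f0 f0)) by exact (good_comp f0 f0 G0 G0).
    assert (Gki : good (pmul g0 g0)) by exact (good_comp g0 g0 Gg0 Gg0).
    assert (Gh1 : good (pconj f1 f0 g0)) by exact (good_comp _ f0 (good_comp g0 f1 Gg0 G1) G0).
    assert (Gh1i : good (pconj g1 f0 g0)) by exact (good_comp _ f0 (good_comp g0 g1 Gg0 Gg1) G0).
    assert (Gh2 : good (pconj f1 (pmul f0 f0) (pmul g0 g0)))
      by exact (good_comp _ _ (good_comp _ f1 Gki G1) Gk).
    assert (Gh2i : good (pconj g1 (pmul f0 f0) (pmul g0 g0)))
      by exact (good_comp _ _ (good_comp _ g1 Gki Gg1) Gk).
    assert (Ig : inv_pair (pmul f0 g1) (pmul f1 g0))
      by exact (inv_pair_comp f0 g0 g1 f1 I0 (inv_pair_sym _ _ I1)).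
    assert (Ik : inv_pair (pmul f0 f0) (pmul g0 g0)) by exact (inv_pair_comp f0 g0 f0 g0 I0 I0).
    assert (Ih1 : inv_pair (pconj f1 f0 g0) (pconj g1 f0 g0))
      by exact (inv_pair_comp _ _ f0 g0 (inv_pair_comp g0 f0 f1 g1 (inv_pair_sym _ _ I0) I1) I0).
    assert (Ih2 : inv_pair (pconj f1 (pmul f0 f0) (pmul g0 g0)) (pconj g1 (pmul f0 f0) (pmul g0 g0)))
      by exact (inv_pair_comp _ _ _ _ (inv_pair_comp _ _ f1 g1 (inv_pair_sym _ _ Ik) I1) Ik).
    pose proof (comm_of _ _ _ _ Ih1 Ig Hc1) as C1.
    pose proof (comm_of _ _ _ _ Ig Ih2 Hc2) as C2.
    assert (O1 : OE (pconj f1 f0 g0) (f0 b0) (f0 b1)) by exact (OE_conj f0 g0 f1 b0 b1 G0 I0 G1 OB).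
    assert (O2 : OE (pconj f1 (pmul f0 f0) (pmul g0 g0)) (pmul f0 f0 b0) (pmul f0 f0 b1))
      by exact (OE_conj _ _ f1 b0 b1 Gk Ik G1 OB).
    assert (Hge : pmul f0 g1 e <> e).
    { unfold pmul. rewrite Fe. intro E. apply (B6 e He).
      destruct (I1 e ltac:(lra)) as (_ & _ & _ & X). rewrite E in X. auto. }
    destruct (exists_orbital _ e Gg ltac:(lra) Hge) as (c0 & c1 & Oc & Hc).
    assert (L0 : f0 b0 < e) by (assert (f0 b0 < f0 e) by (apply I0c; lra); lra).
    assert (L1 : e < f0 b1) by (assert (f0 e < f0 b1) by (apply I0c; lra); lra).
    assert (R0 : 0 <= f0 b0 <= 1) by (apply good_range; auto; lra).
    assert (R1 : 0 <= f0 b1 <= 1) by (apply good_range; auto; lra).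
    assert (L0' : f0 (f0 b0) < e) by (assert (f0 (f0 b0) < f0 e) by (apply I0c; lra); lra).
    assert (L1' : e < f0 (f0 b1)) by (assert (f0 e < f0 (f0 b1)) by (apply I0c; lra); lra).
    destruct (EqOrb _ _ _ _ c0 c1 (f0 b0) (f0 b1) Gg Ggi Gh1 Gh1i Ig Ih1 C1 Oc O1) as (E1 & E2).
    { exists e. lra. }
    assert (C2' : forall y, 0 <= y <= 1 -> pmul f0 g1 (pconj f1 (pmul f0 f0) (pmul g0 g0) y) =
       pconj f1 (pmul f0 f0) (pmul g0 g0) (pmul f0 g1 y)).
    { intros y Hy. symmetry. apply C2; auto. }
    assert (Hx2 : exists y, c0 < y < c1 /\ pmul f0 f0 b0 < y < pmul f0 f0 b1).
    { exists e. unfold pmul. lra. }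
    destruct (EqOrb _ _ _ _ c0 c1 (pmul f0 f0 b0) (pmul f0 f0 b1) Gg Ggi Gh2 Gh2i Ig Ih2 C2' Oc O2 Hx2) as (E3 & E4).
    unfold pmul in E3, E4.
    split.
    - symmetry. apply (incr_inj f0); auto; try lra.
    - symmetry. apply (incr_inj f0); auto; try lra. }
  destruct (Rle_lt_dec b0 a0) as [h1|h1]; destruct (Rle_lt_dec a1 b1) as [h2|h2].
  - left. intros y Hy. apply EB. apply EA in Hy. lra.
  - destruct (Req_dec b0 a0) as [e|ne].
    + right. intros y Hy. apply EA. apply EB in Hy. lra.
    + exfalso. pose proof OA as (A1 & A2 & A3 & A4 & A5 & A6).
      destruct (Key a0 ltac:(lra) A4) as (_ & K). apply (A6 b1); auto. lra.
  - destruct (Req_dec a1 b1) as [e|ne].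
    + right. intros y Hy. apply EA. apply EB in Hy. lra.
    + exfalso. pose proof OA as (A1 & A2 & A3 & A4 & A5 & A6).
      destruct (Key a1 ltac:(lra) A5) as (K & _). apply (A6 b0); auto. lra.
  - right. intros y Hy. apply EA. apply EB in Hy. lra.
Qed.
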